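(* Let $\Sigma$ be a finite alphabet with $|\Sigma|\ge 2$, and let $\delta$ be a uniform Hamming compatible metric on $\Sigma^*$. Then $\delta(u,v)\ge d_2(u,v)$ for all $u,v\in\Sigma^*$. In particular, $\delta(u,v)\to\infty$ as $|l(u)-l(v)|\to\infty$.
   Context: For a finite alphabet $\Sigma$, $\Sigma_n$ denotes the set of words of length $n$ over $\Sigma$, $\Sigma^*=\bigcup_{n\ge 0}\Sigma_n$ is the set of all finite words, $l(u)$ is the length of $u$, and $\varepsilon$ is the empty word. $H$ denotes the usual Hamming distance between two words of equal length (the number of positions where they differ). The truncated Hamming function is defined for arbitrary $u,v\in\Sigma^*$ as follows: if $l(u)\ge l(v)$, let $\underline{u}$ be the prefix of $u$ of length $l(v)$ and $\underline{v}=v$ (symmetrically if $l(v)\ge l(u)$), and $H(\underline{u},\underline{v})$ is the Hamming distance of these two equal-length words. All metrics are integer-valued. A metric $\delta$ on $\Sigma^*$ is Hamming compatible if $\delta(u,v)=H(u,v)$ whenever $l(u)=l(v)$. Define $d_2(u,v)=H(\underline{u},\underline{v})+\lceil |l(u)-l(v)|/2\rceil$. Two words $u,v$ of the same length $n$ are Hamming opposites if $H(u,v)=n$. For a Hamming compatible metric $\delta$ put $\gamma(u,v)=\delta(u,v)-H(\underline{u},\underline{v})$. $\delta$ is called uniform if for every $n$ and every pair of Hamming opposites $u,v\in\Sigma_n$ one has $\gamma(u,w)=\gamma(v,w)$ for all $w\in\Sigma^*$. *)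

(* Defs.v *)
From mathcomp Require Import all_boot all_order all_algebra.
Set Implicit Arguments. Unset Strict Implicit. Unset Printing Implicit Defensive.
Import GRing.Theory Num.Theory.

Section Words.
Variable Sigma : finType.

Definition hamming (u v : seq Sigma) : nat :=
  count (fun p : Sigma * Sigma => p.1 != p.2) (zip u v).

(* Truncated Hamming function: compare the prefix of the longer word of the
   length of the shorter one with the shorter word. *)
Definition trunc_hamming (u v : seq Sigma) : nat :=
  hamming (take (size v) u) (take (size u) v).

Definition len_diff (u v : seq Sigma) : nat :=
  (size u - size v) + (size v - size u).

(* d_2(u,v) = H(u_,v_) + ceil(|l(u)-l(v)|/2); uphalf k = ceil(k/2). *)
Definition d2 (u v : seq Sigma) : nat := trunc_hamming u v + uphalf (len_diff u v).

Definition is_metric (delta : seq Sigma -> seq Sigma -> nat) : Prop :=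
  (forall u v, delta u v = 0%N <-> u = v) /\
  (forall u v, delta u v = delta v u) /\
  (forall u v w, (delta u w <= delta u v + delta v w)%N).

Definition hamming_compatible (delta : seq Sigma -> seq Sigma -> nat) : Prop :=
  forall u v, size u = size v -> delta u v = hamming u v.

Definition hamming_opposites (n : nat) (u v : seq Sigma) : Prop :=
  size u = n /\ size v = n /\ hamming u v = n.

Definition gamma (delta : seq Sigma -> seq Sigma -> nat) (u v : seq Sigma) : int :=
  (delta u v)%:Z - (trunc_hamming u v)%:Z.

Definition uniform (delta : seq Sigma -> seq Sigma -> nat) : Prop :=
  forall n (u v : seq Sigma), hamming_opposites n u v ->
    forall w, gamma delta u w = gamma delta v w.

End Words.

(* Main.v *)
Require Import Defs.
From mathcomp Require Import all_boot all_order all_algebra.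
From mathcomp Require Import zify.

Section Aux.
Variable Sigma : finType.
Variable other : Sigma -> Sigma.
Hypothesis otherP : forall x, other x != x.

Definition opp (a x : Sigma) := if a != x then a else other x.

Lemma oppP a x : opp a x != x.
Proof. rewrite /opp; case: ifP => // /negbFE /eqP ->; rewrite ?otherP //. Qed.

Fixpoint vb (u v : seq Sigma) : seq Sigma :=
  match u, v with
  | a :: u', x :: v' => opp a x :: vb u' v'
  | [::], v => map other v
  | _ :: _, [::] => [::]
  end.

Lemma hamming_cons (x y : Sigma) s t :
  hamming (x :: s) (y :: t) = (x != y) + hamming s t.
Proof. by []. Qed.

Lemma hamming_sym (s t : seq Sigma) : hamming s t = hamming t s.
Proof.
elim: s t => [|x s IH] [|y t] //.
by rewrite !hamming_cons IH eq_sym.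
Qed.

Lemma size_vb u v : size (vb u v) = size v.
Proof. elim: u v => [|a u IH] [|x v] //=; by rewrite ?size_map ?IH. Qed.

Lemma hamming_vb u v : hamming v (vb u v) = size v.
Proof.
elim: u v => [|a u IH] v.
- elim: v => [|y v IHv] //=; by rewrite hamming_cons IHv eq_sym otherP.
- case: v => [|x v] //=; by rewrite hamming_cons IH eq_sym oppP.
Qed.

Lemma sum_vb u v : size u <= size v ->
  hamming u (take (size u) v) + hamming u (take (size u) (vb u v)) = size u.
Proof.
elim: u v => [|a u IH] [|x v] //= Hs.
rewrite !hamming_cons -[in RHS](IH v Hs).
rewrite /opp; case: (a =P x) => [->|/eqP ne] /=.
- rewrite eq_sym otherP. lia.
- rewrite eqxx /=. lia.
Qed.
End Aux.

Lemma th_sym (Sigma : finType) (u v : seq Sigma) : trunc_hamming u v = trunc_hamming v u.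
Proof. by rewrite /trunc_hamming hamming_sym. Qed.

Theorem theorem4p9 (Sigma : finType) (delta : seq Sigma -> seq Sigma -> nat) :
  (2 <= #|Sigma|)%N ->
  is_metric delta -> hamming_compatible delta -> uniform delta ->
  (forall u v : seq Sigma, (d2 u v <= delta u v)%N) /\
  (forall N : nat, exists M : nat, forall u v : seq Sigma,
      (M <= len_diff u v)%N -> (N <= delta u v)%N).
Proof.
move=> H2 [Hz [Hsym Htri]] Hc Hu.
pose other (x : Sigma) := if [pick y | y != x] is Some y then y else x.
have otherP : forall x, other x != x.
  move=> x; rewrite /other; case: pickP => [y //|H].
  have : #|Sigma| <= 1.
    apply/fintype_le1P => a b.
    by rewrite (eqP (negbFE (H a))) (eqP (negbFE (H b))).
  by rewrite leqNgt H2.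
have main : forall u v : seq Sigma, size u <= size v -> d2 u v <= delta u v.
  move=> u v Hs.
  set w := @vb Sigma other u v.
  have Hop : hamming_opposites (size v) v w.
    by split; [|split]; rewrite ?size_vb ?hamming_vb.
  have Hg := Hu _ _ _ Hop u.
  rewrite /gamma !(th_sym _ _ u) !(Hsym _ u) in Hg.
  have Hvw : delta v w = size v by rewrite Hc ?size_vb // hamming_vb.
  have Ht := Htri v u w.
  rewrite Hvw (Hsym v u) in Ht.
  have Hsum := @sum_vb Sigma other otherP u v Hs.
  have E1 : trunc_hamming u v = hamming u (take (size u) v).
    by rewrite /trunc_hamming take_oversize.
  have E2 : trunc_hamming u w = hamming u (take (size u) w).
    by rewrite /trunc_hamming take_oversize // size_vb.
  rewrite -E1 -E2 in Hsum.
  have Hld : len_diff u v = size v - size u by rewrite /len_diff; lia.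
  rewrite /d2 Hld.
  move: Hg Hsum Ht.
  set D1 := delta u v; set D2 := delta u w; set T1 := trunc_hamming u v;
    set T2 := trunc_hamming u w.
  move=> Hg Hsum Ht.
  have Hg' : (D1 + T2 = D2 + T1)%N by lia.
  have : uphalf (size v - size u) <= D1 - T1.
    rewrite leq_uphalf_double -mul2n; lia.
  lia.
have Hall : forall u v : seq Sigma, d2 u v <= delta u v.
  move=> u v; case: (leqP (size u) (size v)) => Hs; first exact: main.
  rewrite Hsym /d2 th_sym.
  have -> : len_diff u v = len_diff v u by rewrite /len_diff addnC.
  by apply: main; apply: ltnW.
split => // N; exists N.*2 => u v HM.
apply: leq_trans (Hall u v); rewrite /d2.
apply: leq_trans (leq_addl _ _).
by rewrite geq_uphalf_double; apply: leq_trans HM _.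
Qed.
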